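(* Let $L \ge N$, let $\mathbf{T} \in \mathbb{R}^{L\times N}$ have full rank $N$, and let $\gamma>0$. Define on $\mathbb{R}^N$ the norm $\|\mathbf{x}\|_{\mathbf{T}} := \|\mathbf{T}\mathbf{x}\|_2$. Then the operators $\mathbf{T}^{\dagger}S_\gamma\mathbf{T}$ and $\mathbf{I}-\mathbf{T}^{\dagger}S_\gamma\mathbf{T}$ are firmly non-expansive with respect to $\|\cdot\|_{\mathbf{T}}$, i.e., for all $\mathbf{x},\mathbf{y}\in\mathbb{R}^N$, $$\|\mathbf{T}^{\dagger}S_\gamma\mathbf{T}\mathbf{x} - \mathbf{T}^{\dagger}S_\gamma\mathbf{T}\mathbf{y}\|_{\mathbf{T}}^2 + \|(\mathbf{I}-\mathbf{T}^{\dagger}S_\gamma\mathbf{T})\mathbf{x} - (\mathbf{I}-\mathbf{T}^{\dagger}S_\gamma\mathbf{T})\mathbf{y}\|_{\mathbf{T}}^2 \le \|\mathbf{x}-\mathbf{y}\|_{\mathbf{T}}^2.$$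
   Context: $\mathbf{T}^*$ is the transpose, $\mathbf{T}^{\dagger}=(\mathbf{T}^*\mathbf{T})^{-1}\mathbf{T}^*$ the Moore–Penrose inverse, $\mathbf{I}$ the $N\times N$ identity, $\|\cdot\|_2$ the Euclidean norm on $\mathbb{R}^L$. $S_\gamma:\mathbb{R}^L\to\mathbb{R}^L$ is componentwise soft shrinkage: $[S_\gamma(\mathbf{y})]_j = y_j-\gamma$ if $y_j\ge\gamma$, $y_j+\gamma$ if $y_j\le-\gamma$, $0$ if $|y_j|<\gamma$. *)

(* Defs.v *)
From HB Require Import structures.
From mathcomp Require Import all_boot all_order all_algebra.
From mathcomp Require Import reals.
Set Implicit Arguments. Unset Strict Implicit. Unset Printing Implicit Defensive.
Import Order.TTheory GRing.Theory Num.Theory.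
Local Open Scope ring_scope.

Definition norm2 {R : realType} {L : nat} (v : 'cV[R]_L) : R :=
  Num.sqrt (\sum_(j < L) (v j 0) ^+ 2).

Definition normT {R : realType} {L N : nat} (T : 'M[R]_(L, N)) (x : 'cV[R]_N) : R :=
  norm2 (T *m x).

(* Moore-Penrose inverse (T^* T)^{-1} T^* for a full column rank T. *)
Definition pinv {R : realType} {L N : nat} (T : 'M[R]_(L, N)) : 'M[R]_(N, L) :=
  invmx (T^T *m T) *m T^T.

Definition soft_scalar {R : realType} (g t : R) : R :=
  if g <= t then t - g else if t <= - g then t + g else 0.

Definition soft {R : realType} {L : nat} (g : R) (y : 'cV[R]_L) : 'cV[R]_L :=
  \col_j soft_scalar g (y j 0).

Definition TST {R : realType} {L N : nat} (T : 'M[R]_(L, N)) (g : R)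
  (x : 'cV[R]_N) : 'cV[R]_N :=
  pinv T *m soft g (T *m x).

(* Main.v *)
Require Import Defs.
From HB Require Import structures.
From mathcomp Require Import all_boot all_order all_algebra.
From mathcomp Require Import reals.
From mathcomp Require Import ring lra.
Import Order.TTheory GRing.Theory Num.Theory.
Local Open Scope ring_scope.
Set Implicit Arguments. Unset Strict Implicit. Unset Printing Implicit Defensive.

Lemma soft_fne (R : realType) (g s t : R) : 0 < g ->
  (soft_scalar g s - soft_scalar g t) ^+ 2 <= (s - t) * (soft_scalar g s - soft_scalar g t).
Proof.
move=> hg; rewrite /soft_scalar.
case: (lerP g s) => h1; case: (lerP s (-g)) => h2; case: (lerP g t) => h3; case: (lerP t (-g)) => h4; nra.
Qed.

Lemma unitTT (R : realType) (L N : nat) (T : 'M[R]_(L, N)) :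
  \rank T = N -> (T^T *m T) \in unitmx.
Proof.
move=> hr; rewrite -row_free_unit; apply: inj_row_free => v hv.
have hw : v *m T^T = 0.
  set w := v *m T^T.
  have : (w *m w^T) 0 0 = 0.
    by rewrite /w trmx_mul trmxK mulmxA -(mulmxA v) hv mul0mx mxE.
  rewrite mxE; under eq_bigr do rewrite [w^T _ _]mxE.
  move=> /eqP; rewrite psumr_eq0; last by move=> j _; rewrite -expr2 sqr_ge0.
  move=> /allP H; apply/matrixP => i j; rewrite ord1 [RHS]mxE.
  have := H j (mem_index_enum _); rewrite /= -expr2 sqrf_eq0 => /eqP ->; by [].
apply/eqP; rewrite -(mulmx_free_eq0 _ (B:=T^T)) ?hw //.
by rewrite /row_free mxrank_tr hr.
Qed.
Lemma subr_swap (V : zmodType) (a b c d : V) : a - b - (c - d) = a - c - (b - d).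
Proof.
rewrite !opprD !opprK !addrA; congr (_ + _); rewrite -!addrA; congr (_ + _); exact: addrC.
Qed.

Definition dot (R : realType) (n : nat) (u w : 'cV[R]_n) : R := (u^T *m w) 0 0.

Lemma dotE (R : realType) n (u w : 'cV[R]_n) : dot u w = \sum_j u j 0 * w j 0.
Proof. rewrite /dot mxE; apply: eq_bigr => j _; by rewrite mxE. Qed.

Lemma dotBl (R : realType) n (u v w : 'cV[R]_n) : dot (u - v) w = dot u w - dot v w.
Proof. rewrite !dotE -sumrB; apply: eq_bigr => j _; rewrite !mxE; ring. Qed.

Lemma dotC (R : realType) n (u w : 'cV[R]_n) : dot u w = dot w u.
Proof. rewrite !dotE; apply: eq_bigr => j _; ring. Qed.

Lemma dotBr (R : realType) n (u v w : 'cV[R]_n) : dot w (u - v) = dot w u - dot w v.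
Proof. by rewrite !(dotC w) dotBl. Qed.

Lemma dotM (R : realType) m n (A : 'M[R]_(m, n)) u w : dot (A *m u) w = dot u (A^T *m w).
Proof. by rewrite /dot trmx_mul mulmxA. Qed.

Lemma dot_sub_sq (R : realType) n (u v : 'cV[R]_n) :
  dot (u - v) (u - v) = dot u u - dot u v - dot v u + dot v v.
Proof. by rewrite !dotBl !dotBr; ring. Qed.

Lemma dot_ge0 (R : realType) n (u : 'cV[R]_n) : 0 <= dot u u.
Proof. rewrite dotE; apply: sumr_ge0 => j _; rewrite -expr2; exact: sqr_ge0. Qed.

Lemma normT_sq (R : realType) L N (T : 'M[R]_(L, N)) x : normT T x ^+ 2 = dot (T *m x) (T *m x).
Proof.
rewrite /normT /norm2 sqr_sqrtr; last first.
  by apply: sumr_ge0 => j _; exact: sqr_ge0.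
by rewrite dotE; apply: eq_bigr => j _; rewrite expr2.
Qed.

Theorem proposition2p3 (R : realType) (L N : nat) (T : 'M[R]_(L, N)) (g : R)
  (hLN : (N <= L)%N) (hrank : \rank T = N) (hg : 0 < g) :
  forall x y : 'cV[R]_N,
    (normT T (TST T g x - TST T g y)) ^+ 2
    + (normT T ((x - TST T g x) - (y - TST T g y))) ^+ 2
    <= (normT T (x - y)) ^+ 2.
Proof.
move=> x y.
have hu := unitTT hrank.
set M := invmx (T^T *m T).
set P := T *m pinv T.
have PT : P *m T = T.
  by rewrite /P /pinv -!mulmxA /M mulVmx // mulmx1.
have Psym : P^T = P.
  by rewrite /P /pinv !trmx_mul trmxK /M trmx_inv trmx_mul trmxK mulmxA.
have PP : P *m P = P.
  by have := mulmxA P T (pinv T); rewrite PT.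
set d := T *m (x - y).
set e := soft g (T *m x) - soft g (T *m y).
have h1 : T *m (TST T g x - TST T g y) = P *m e.
  by rewrite /TST mulmxBr /e mulmxBr /P /pinv !mulmxA.
have h2 : T *m ((x - TST T g x) - (y - TST T g y)) = d - P *m e.
  by rewrite -h1 /d !mulmxBr subr_swap.
have Pd : P *m d = d by rewrite /d mulmxA PT.
have hee : dot e e <= dot d e.
  rewrite !dotE; apply: ler_sum => j _.
  rewrite /d /e !mulmxBr !mxE -expr2; exact: soft_fne.
have hq := dot_ge0 (e - P *m e).
rewrite !normT_sq h1 h2 -/d.
have c1 : dot (P *m e) (P *m e) = dot e (P *m e) by rewrite dotM mulmxA Psym PP.
have c2 : dot d (P *m e) = dot d e by rewrite dotC dotM Psym Pd dotC.
have c3 : dot (P *m e) d = dot d e by rewrite dotC c2.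
move: hq; rewrite (dot_sub_sq e (P *m e)) (dot_sub_sq d (P *m e)) c1 c2 c3 (dotC (P *m e) e).
lra.
Qed.
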